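(* Let $q$ be a prime power, let $C$ be an $[n,k,d]_q$ Griesmer optimal linear code, and let $k_1=\min\{\Gamma_q(n,k,d),k-1\}$. Then $C$ has a chain of linear subcodes $C_1\subset C_2\subset\cdots\subset C_{k_1}\subset C$ such that, for each $1\le i\le k_1$, $C_i$ has dimension $i$ and effective length $n(C_i)=g_q(i,d)$.
   Context: An $[n,k,d]_q$ linear code is a $k$-dimensional subspace of $\mathbb{F}_q^n$ with minimum nonzero Hamming weight $d$. The support of a code $D$ is the set of coordinates on which some codeword of $D$ is nonzero, and its effective length $n(D)$ is the size of this set. Let $g_q(k,d)=\sum_{i=0}^{k-1}\lceil d/q^i\rceil$. $C$ is Griesmer optimal if $n<g_q(k,d+1)$. For a Griesmer optimal $[n,k,d]_q$ code, $\Gamma_q(n,k,d)=k$ if $n=g_q(k,d)$; otherwise $\Gamma_q(n,k,d)$ is the smallest non-negative integer $k_1$ such that $n-g_q(k_1,d)\ge g_q(k-k_1,\lceil d/q^{k_1}\rceil+1)$ (with $g_q(0,\cdot)=0$). *)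

(* Defs.v *)
From HB Require Import structures.
From mathcomp Require Import all_boot all_order all_algebra.
Set Implicit Arguments. Unset Strict Implicit. Unset Printing Implicit Defensive.
Import GRing.Theory.

Local Open Scope ring_scope.

Definition ceil_div (a b : nat) : nat := ((a + b.-1) %/ b)%N.

Definition griesmer (q k d : nat) : nat := (\sum_(i < k) ceil_div d (q ^ i))%N.

Section Codes.
Variables (F : finFieldType) (n : nat).

Definition wt (v : 'rV[F]_n) : nat := #|[set i : 'I_n | v 0 i != 0]|.

Definition code_support (D : {vspace 'rV[F]_n}) : {set 'I_n} :=
  [set i : 'I_n | [exists v : 'rV[F]_n, (v \in D) && (v 0 i != 0)]].

Definition eff_length (D : {vspace 'rV[F]_n}) : nat := #|code_support D|.

Definition min_weight (D : {vspace 'rV[F]_n}) (d : nat) : Prop :=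
  (exists2 v, v \in D & (v != 0) /\ wt v = d) /\
  (forall v, v \in D -> v != 0 -> (d <= wt v)%N).

Definition is_code (C : {vspace 'rV[F]_n}) (k d : nat) : Prop :=
  \dim C = k /\ min_weight C d.

End Codes.

Definition griesmer_optimal (q n k d : nat) : Prop := (n < griesmer q k d.+1)%N.

(* For a code meeting the
   Griesmer bound k1 = k always satisfies the condition, so searching in
   [0, k] finds the least such k1. *)
Definition Gamma (q n k d : nat) : nat :=
  if n == griesmer q k d then k
  else find (fun k1 => griesmer q (k - k1) (ceil_div d (q ^ k1)).+1
                         <= n - griesmer q k1 d)%N (iota 0 k.+1).

(* Main.v *)
Require Import Defs.
From mathcomp Require Import all_boot all_order all_algebra.
From mathcomp Require Import zify.
Set Implicit Arguments. Unset Strict Implicit. Unset Printing Implicit Defensive.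
Import GRing.Theory.

Lemma ceil_leq a b y : (0 < b)%N -> (ceil_div a b <= y)%N = (a <= y * b)%N.
Proof.
move=> b0; rewrite /ceil_div -ltnS ltn_divLR //.
apply/idP/idP; lia.
Qed.

Lemma ceil_ceil a b c : (0 < b)%N -> (0 < c)%N ->
  ceil_div (ceil_div a b) c = ceil_div a (b * c).
Proof.
move=> b0 c0; have bc0 : (0 < b * c)%N by rewrite muln_gt0 b0.
have H y : (ceil_div (ceil_div a b) c <= y)%N = (ceil_div a (b * c) <= y)%N.
  by rewrite ceil_leq // ceil_leq // ceil_leq // mulnA mulnAC.
by apply/eqP; rewrite eqn_leq H leqnn -H leqnn.
Qed.

Lemma ceil_div1 a : ceil_div a 1 = a.
Proof. by rewrite /ceil_div addn0 divn1. Qed.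

Lemma ceil_mono a b c : (a <= b)%N -> (ceil_div a c <= ceil_div b c)%N.
Proof. by move=> ab; rewrite /ceil_div leq_div2r // leq_add2r. Qed.

Lemma griesmer_mono q k a b : (a <= b)%N -> (griesmer q k a <= griesmer q k b)%N.
Proof. by move=> ab; apply: leq_sum => i _; apply: ceil_mono. Qed.

Lemma griesmerS q k d : (0 < q)%N ->
  griesmer q k.+1 d = (d + griesmer q k (ceil_div d q))%N.
Proof.
move=> q0; rewrite /griesmer big_ord_recl /= expn0 ceil_div1; congr (_ + _)%N.
by apply: eq_bigr => i _; rewrite ceil_ceil ?expn_gt0 ?q0 // expnS.
Qed.

Lemma griesmer_split q j m d : (0 < q)%N ->
  griesmer q (j + m) d = (griesmer q j d + griesmer q m (ceil_div d (q ^ j)))%N.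
Proof.
move=> q0; elim: j d => [|j IH] d.
  by rewrite /griesmer big_ord0 add0n expn0 ceil_div1.
rewrite addSn !griesmerS // IH addnA; congr (_ + griesmer _ _ _)%N.
by rewrite ceil_ceil ?expn_gt0 ?q0 // expnS.
Qed.

Local Open Scope ring_scope.
Section G.
Variables (F : finFieldType) (n : nat).
Implicit Types (S : {set 'I_n}) (v a c : 'rV[F]_n).

Definition wtS S v : nat := (\sum_(i in S) (v 0%R i != 0%R : nat))%N.

Lemma wtS_cond S c : wtS S c = (\sum_(i in S | c 0%R i != 0%R) 1)%N.
Proof.
rewrite /wtS big_mkcondr /=; apply: eq_bigr => i _; by case: (c 0%R i != 0%R).
Qed.

Lemma card_split S c :
  #|S| = (wtS S c + #|[set i in S | c 0%R i == 0%R]|)%N.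
Proof.
rewrite -sum1_card (bigID (fun i => c 0%R i != 0%R)) /= wtS_cond; congr (_ + _)%N.
rewrite -sum1_card; apply: eq_bigl => i; by rewrite !inE negbK.
Qed.

Lemma sum_root (x y : F) : y != 0 ->
  (\sum_(l : F) ((x + l * y == 0)%R : nat))%N = 1%N.
Proof.
move=> y0.
have E l : (x + l * y == 0) = (l == - x / y).
  rewrite addrC addr_eq0; apply/eqP/eqP => [<-|->].
    by rewrite mulfK.
  by rewrite divfK.
rewrite (bigD1 (- x / y)) //= E eqxx big1 // => l /negbTE hl.
by rewrite E hl.
Qed.

Lemma pigeon (V : {vspace 'rV[F]_n}) S c a :
  c != 0 -> c \in V -> a \in V -> a \notin <[c]>%VS ->
  (forall v, v \in V -> v != 0 -> (wtS S c <= wtS S v)%N) ->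
  (ceil_div (wtS S c) #|F| <= wtS [set i in S | c 0%R i == 0%R] a)%N.
Proof.
move=> c0 cV aV anc cmin.
have q0 : (0 < #|F|)%N by apply/card_gt0P; exists 0.
set w := wtS S c; set t := ceil_div w #|F|.
pose Z (l : F) := (\sum_(i in S | c 0%R i != 0%R) ((a 0%R i + l * c 0%R i == 0)%R : nat))%N.
have sumZ : (\sum_(l : F) Z l)%N = w.
  rewrite /Z exchange_big /= /w wtS_cond; apply: eq_bigr => i /andP[_ ci].
  exact: sum_root.
have [l tl] : exists l, (t <= Z l)%N.
  apply/existsP; apply: contraT; rewrite negb_exists => /forallP H.
  have Hl l : (Z l <= t.-1)%N by move: (H l); rewrite -ltnNge; lia.
  have : (w <= #|F| * t.-1)%N.
    have Hs : (\sum_(l : F) Z l <= \sum_(l : F) t.-1)%N by apply: leq_sum => l _; exact: Hl.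
    by rewrite -sumZ; apply: (leq_trans Hs); rewrite sum_nat_const.
  rewrite mulnC -ceil_leq // -/t.
  have : (0 < t)%N by move: (H 0); rewrite -ltnNge; lia.
  lia.
pose v := a + l *: c.
have vV : v \in V by rewrite /v memvD // memvZ.
have v0 : v != 0.
  apply: contra anc => /eqP h; apply/vlineP; exists (- l).
  by apply/eqP; rewrite scaleNr -addr_eq0 -h.
have := cmin v vV v0; rewrite -/w.
have split1 : wtS S v = (\sum_(i in S | c 0%R i != 0%R) (v 0%R i != 0%R : nat)
     + wtS [set i in S | c 0%R i == 0%R] a)%N.
  rewrite /wtS (bigID (fun i => c 0%R i != 0%R)) /=; congr (_ + _)%N.
  rewrite [RHS](eq_bigl (fun i => (i \in S) && ~~ (c 0%R i != 0%R))); last first.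
    by move=> i; rewrite !inE negbK.
  apply: eq_bigr => i /andP[_]; rewrite negbK => /eqP ci.
  by rewrite /v !mxE ci mulr0 addr0.
have split2 : (\sum_(i in S | c 0%R i != 0%R) (v 0%R i != 0%R : nat) + Z l)%N = w.
  rewrite /Z -big_split /= /w wtS_cond; apply: eq_bigr => i _.
  by rewrite /v !mxE; case: eqP.
lia.
Qed.


Lemma griesmer_gen K : forall S (V : {vspace 'rV[F]_n}) delta,
  \dim V = K -> (forall v, v \in V -> v != 0 -> (delta <= wtS S v)%N) ->
  (griesmer #|F| K delta <= #|S|)%N.
Proof.
have q0 : (0 < #|F|)%N by apply/card_gt0P; exists 0.
elim: K => [|K IH] S V delta dV Hd.
  by rewrite /griesmer big_ord0.
set v0 := vpick V.
have Pv0 : (v0 \in V) && (v0 != 0).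
  by rewrite memv_pick vpick0 -dimv_eq0 dV.
case: (@arg_minnP _ v0 (fun v => (v \in V) && (v != 0)) (wtS S) Pv0).
move=> c /andP[cV c0] cmin.
have cmin' : forall v, v \in V -> v != 0 -> (wtS S c <= wtS S v)%N.
  by move=> v vV vn0; apply: cmin; rewrite vV vn0.
set W := (V :\: <[c]>)%VS.
have dW : \dim W = K.
  have := dimv_cap_compl V <[c]>.
  rewrite (capv_idPr _); last by rewrite -memvE.
  by rewrite dim_vline c0 dV add1n => -[].
have HT := IH [set i in S | c 0%R i == 0%R] W (ceil_div (wtS S c) #|F|) dW.
have : (griesmer #|F| K (ceil_div (wtS S c) #|F|) <= #|[set i in S | c 0%R i == 0%R]|)%N.
  apply: HT => a aW a0; apply: (@pigeon V S c a c0 cV) => //.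
    by apply: (subvP (diffvSl V <[c]>)).
  apply: contra a0 => ac.
  have : a \in (W :&: <[c]>)%VS by rewrite memv_cap aW.
  by rewrite capv_diff memv0.
move=> HK.
rewrite (card_split S c).
apply: leq_trans (griesmer_mono _ _ (Hd c cV c0)) _.
by rewrite griesmerS // leq_add2l.
Qed.


Lemma supp_add (D : {vspace 'rV[F]_n}) a :
  code_support (D + <[a]>)%VS = code_support D :|: [set i | a 0%R i != 0%R].
Proof.
apply/setP => i; rewrite !inE; apply/existsP/idP.
  case=> v /andP[/memv_addP[u uD [w /vlineP[m ->] ->]]].
  rewrite !mxE => h.
  case: (eqVneq (u 0%R i) 0) => [ui|ui]; last by apply/orP; left; apply/existsP; exists u; rewrite uD.
  apply/orP; right; apply: contra h => /eqP ->; by rewrite ui mulr0 addr0.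
case/orP => [/existsP[u /andP[uD ui]]|ai].
  by exists u; rewrite ui andbT (subvP (addvSl D <[a]>)).
by exists a; rewrite ai andbT (subvP (addvSr D <[a]>)) // memv_line.
Qed.

Lemma eff_add (D : {vspace 'rV[F]_n}) a :
  eff_length (D + <[a]>)%VS = (eff_length D + wtS (~: code_support D) a)%N.
Proof.
rewrite /eff_length supp_add -(cardsID (code_support D)) setUK setDUl setDv set0U.
congr (_ + _)%N; rewrite wtS_cond -sum1_card; apply: eq_bigl => i.
by rewrite !inE andbC.
Qed.

Lemma dim_add (D : {vspace 'rV[F]_n}) a : a \notin D ->
  \dim (D + <[a]>)%VS = (\dim D).+1.
Proof.
move=> aD; rewrite dimv_disjoint_sum.
  have a0 : a != 0 by apply: contra aD => /eqP ->; rewrite mem0v.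
  by rewrite dim_vline a0 addn1.
apply/eqP; rewrite -subv0; apply/subvP => x; rewrite memv_cap => /andP[xD /vlineP[m xe]].
rewrite memv0 xe; case: (eqVneq m 0) => [->|m0]; first by rewrite scale0r.
exfalso; move/negP: aD; apply.
by rewrite -[a](scalerK m0) memvZ // -xe.
Qed.

Lemma eff0 : eff_length (0%VS : {vspace 'rV[F]_n}) = 0%N.
Proof.
rewrite /eff_length; apply/eqP; rewrite cards_eq0; apply/eqP/setP => i.
rewrite !inE; case: existsP => // -[v /andP[]]; rewrite memv0 => /eqP ->.
by rewrite mxE eqxx.
Qed.

Lemma lower_bound (C D : {vspace 'rV[F]_n}) d :
  min_weight C d -> (D <= C)%VS -> (griesmer #|F| (\dim D) d <= eff_length D)%N.
Proof.
move=> [_ mw] DC; apply: (@griesmer_gen _ _ D) => // v vD v0.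
have -> : wtS (code_support D) v = wt v.
  rewrite wtS_cond /wt -sum1_card; apply: eq_bigl => i; rewrite !inE.
  apply/andP/idP => [[]//|vi]; split => //; apply/existsP; exists v; by rewrite vD vi.
by apply: mw => //; apply: (subvP DC).
Qed.

End G.

Lemma step_exists (F : finFieldType) (n k d j : nat) (C D : {vspace 'rV[F]_n}) :
  \dim C = k -> (D <= C)%VS -> \dim D = j -> eff_length D = griesmer #|F| j d ->
  (j < minn (Gamma #|F| n k d) k.-1)%N ->
  exists2 a, a \in C & (a \notin D) && (wtS (~: code_support D) a <= ceil_div d (#|F| ^ j))%N.
Proof.
move=> dC DC dD eD jk1.
have q0 : (0 < #|F|)%N by apply/card_gt0P; exists 0.
set t := ceil_div d (#|F| ^ j).
case: (boolP [exists a, [&& a \in C, a \notin D & (wtS (~: code_support D) a <= t)%N]]).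
  by case/existsP => a /and3P[aC aD at']; exists a => //; rewrite aD.
rewrite negb_exists => /forallP H.
exfalso.
set W := (C :\: D)%VS.
have dW : \dim W = (k - j)%N.
  have := dimv_cap_compl C D; rewrite (capv_idPr DC) dD dC -/W; lia.
have HG : (griesmer #|F| (k - j) t.+1 <= #|~: code_support D|)%N.
  apply: (@griesmer_gen F n _ _ W) => // a aW a0.
  have aC : a \in C by apply: (subvP (diffvSl C D)).
  have aD : a \notin D.
    apply: contra a0 => ad.
    have : a \in (W :&: D)%VS by rewrite memv_cap aW.
    by rewrite capv_diff memv0.
  by move: (H a); rewrite aC aD /= -ltnNge.
have cC := cardsC (code_support D); rewrite card_ord in cC.
have HP : (griesmer #|F| (k - j) t.+1 <= n - griesmer #|F| j d)%N.
  rewrite -eD /eff_length; lia.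
have jk : (j < k)%N by lia.
move: jk1; rewrite /Gamma; case: eqP => [En|_].
  have Eg := griesmer_split j (k - j) d q0; rewrite subnKC in Eg; last lia.
  move: HP; rewrite En Eg addKn -/t.
  case E: (k - j)%N => [|m]; first lia.
  rewrite !griesmerS //.
  have := griesmer_mono #|F| m (ceil_mono #|F| (leqnSn t)).
  lia.
move=> jlt.
have jf : (j < find (fun k1 => griesmer #|F| (k - k1) (ceil_div d (#|F| ^ k1)).+1
                         <= n - griesmer #|F| k1 d)%N (iota 0 k.+1))%N by lia.
have := before_find 0%N jf; rewrite nth_iota; last lia.
by rewrite add0n HP.
Qed.

Lemma chain (F : finFieldType) (n k d : nat) (C : {vspace 'rV[F]_n}) j :
  \dim C = k -> min_weight C d -> (j <= minn (Gamma #|F| n k d) k.-1)%N ->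
  exists f : nat -> {vspace 'rV[F]_n},
    (forall i, (i <= j)%N ->
       [/\ (f i <= C)%VS, \dim (f i) = i & eff_length (f i) = griesmer #|F| i d]) /\
    (forall i, (i < j)%N -> (f i <= f i.+1)%VS).
Proof.
move=> dC mw; elim: j => [|j IH] jk.
  exists (fun _ => 0%VS); split => // i; rewrite leqn0 => /eqP ->.
  by split; rewrite ?sub0v ?dimv0 ?eff0 // /griesmer big_ord0.
have [f [Hf Hc]] := IH (ltnW jk).
have [Dc dD eD] := Hf j (leqnn j).
have [a aC /andP[aD aw]] := step_exists dC Dc dD eD jk.
pose D' := (f j + <[a]>)%VS.
have D'C : (D' <= C)%VS by rewrite subv_add Dc -memvE.
have dD' : \dim D' = j.+1 by rewrite dim_add // dD.
have eD' : eff_length D' = griesmer #|F| j.+1 d.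
  apply/eqP; rewrite eqn_leq; apply/andP; split.
    rewrite eff_add eD /griesmer big_ord_recr /= leq_add2l; exact: aw.
  by rewrite -dD'; apply: lower_bound mw D'C.
exists (fun i => if i == j.+1 then D' else f i); split.
  move=> i; rewrite leq_eqVlt; case: eqP => [-> _|_ /= ilt]; first by [].
  exact: Hf.
move=> i ilt; rewrite (ltn_eqF ilt) eqSS.
case: eqP => [->|ij]; first by rewrite addvSl.
apply: Hc; move: ilt ij => /[swap]; lia.
Qed.

Theorem proposition2 (F : finFieldType) (n k d : nat)
    (C : {vspace 'rV[F]_n}) :
  is_code C k d ->
  griesmer_optimal #|F| n k d ->
  let k1 := minn (Gamma #|F| n k d) k.-1 in
  exists Cs : nat -> {vspace 'rV[F]_n},
    (forall i, (1 <= i <= k1)%N ->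
       [/\ (Cs i <= C)%VS, \dim (Cs i) = i & eff_length (Cs i) = griesmer #|F| i d]) /\
    (forall i, (1 <= i < k1)%N -> (Cs i <= Cs i.+1)%VS).
Proof.
move=> [dC mw] _ k1.
have [f [Hf Hc]] := chain dC mw (leqnn k1).
exists f; split.
  by move=> i /andP[_ ik]; apply: Hf.
by move=> i /andP[_ ik]; apply: Hc.
Qed.
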